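(* Let $\Lambda=\{\Lambda_j\}_{j=1}^\infty$ and $\Omega=\{\Omega_j\}_{j=1}^\infty$ be $(C,C')$-controlled $K$-$g$-frames for $\mathcal H$ with respect to $\{\mathcal H_j\}_{j=1}^\infty$ and $\{\mathcal W_j\}_{j=1}^\infty$, respectively. For each $j\in\mathbb N$ let $\{f_{jk}\}_{k\in I_j}$ ($I_j\subseteq\mathbb N$) be a frame for $\mathcal H_j$ with frame bounds $\alpha,\beta$ and $\{g_{jk}\}_{k\in Q_j}$ ($Q_j\subseteq\mathbb N$) a frame for $\mathcal W_j$ with frame bounds $\alpha',\beta'$ (the bounds independent of $j$). Then the following are equivalent: (i) $\Lambda$ and $\Omega$ are $(C,C')$-controlled $K$-$g$-woven; (ii) $\{(CC')^{1/2}\Lambda_j^*f_{jk}\}_{j\in\mathbb N,k\in I_j}$ and $\{(CC')^{1/2}\Omega_j^*g_{jk}\}_{j\in\mathbb N,k\in Q_j}$ are woven $K$-frames for $\mathcal H$, i.e. there are universal constants $0<D_1\le D_2<\infty$ such that for every $\sigma\subseteq\mathbb N$ and all $f\in\mathcal H$, $$D_1\|K^*f\|^2\le\sum_{j\in\sigma}\sum_{k\in I_j}|\langle f,(CC')^{1/2}\Lambda_j^*f_{jk}\rangle|^2+\sum_{j\in\sigma^c}\sum_{k\in Q_j}|\langle f,(CC')^{1/2}\Omega_j^*g_{jk}\rangle|^2\le D_2\|f\|^2.$$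
   Context: $\mathcal H$ is a complex separable Hilbert space, $K\in\mathcal L(\mathcal H)$, $C,C'\in\mathcal{GL}^+(\mathcal H)$ (bounded positive operators with bounded inverse); $\{\mathcal H_j\}$, $\{\mathcal W_j\}$ are sequences of closed subspaces of Hilbert spaces $\mathcal K_1,\mathcal K_2$; $\Lambda_j\in\mathcal L(\mathcal H,\mathcal H_j)$, $\Omega_j\in\mathcal L(\mathcal H,\mathcal W_j)$. Standing assumption: $C$ and $C'$ commute with each other and with every $\Lambda_j^*\Lambda_j$ and $\Omega_j^*\Omega_j$, so $(CC')^{1/2}$ exists and $\langle\Lambda_jCf,\Lambda_jC'f\rangle=\|\Lambda_j(CC')^{1/2}f\|^2$ (similarly for $\Omega_j$). A family $\{\Gamma_j\}$ is a $(C,C')$-controlled $K$-$g$-frame if there are $0<A\le B$ with $A\|K^*f\|^2\le\sum_j\langle\Gamma_jCf,\Gamma_jC'f\rangle\le B\|f\|^2$ for all $f$. $\Lambda,\Omega$ are $(C,C')$-controlled $K$-$g$-woven if there are universal $0<A\le B$ such that for every $\sigma\subseteq\mathbb N$ the family $\{\Lambda_j\}_{j\in\sigma}\cup\{\Omega_j\}_{j\in\sigma^c}$ is a $(C,C')$-controlled $K$-$g$-frame with bounds $A,B$. A sequence $\{h_k\}$ in a Hilbert space $V$ is a frame with bounds $a,b>0$ if $a\|v\|^2\le\sum_k|\langle v,h_k\rangle|^2\le b\|v\|^2$ for all $v\in V$. *)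

(* Defs.v *)
From Stdlib Require Import Reals.
Open Scope R_scope.

Record Cplx := mkC { Re : R ; Im : R }.
Definition C0 : Cplx := mkC 0 0.
Definition C1 : Cplx := mkC 1 0.
Definition Cadd (a b : Cplx) : Cplx := mkC (Re a + Re b) (Im a + Im b).
Definition Cmul (a b : Cplx) : Cplx :=
  mkC (Re a * Re b - Im a * Im b) (Re a * Im b + Im a * Re b).
Definition Cconj (a : Cplx) : Cplx := mkC (Re a) (- Im a).
Definition Cnorm2 (a : Cplx) : R := Re a * Re a + Im a * Im a.

Record Hilbert := {
  carrier :> Type;
  hzero : carrier;
  hadd : carrier -> carrier -> carrier;
  hopp : carrier -> carrier;
  hscal : Cplx -> carrier -> carrier;
  hinner : carrier -> carrier -> Cplx;
  hadd_assoc : forall x y z, hadd x (hadd y z) = hadd (hadd x y) z;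
  hadd_comm : forall x y, hadd x y = hadd y x;
  hadd_0 : forall x, hadd x hzero = x;
  hadd_opp : forall x, hadd x (hopp x) = hzero;
  hscal_1 : forall x, hscal C1 x = x;
  hscal_assoc : forall a b x, hscal a (hscal b x) = hscal (Cmul a b) x;
  hscal_distr_v : forall a x y, hscal a (hadd x y) = hadd (hscal a x) (hscal a y);
  hscal_distr_s : forall a b x, hscal (Cadd a b) x = hadd (hscal a x) (hscal b x);
  hinner_conj : forall x y, hinner x y = Cconj (hinner y x);
  hinner_add_l : forall x y z, hinner (hadd x y) z = Cadd (hinner x z) (hinner y z);
  hinner_scal_l : forall a x y, hinner (hscal a x) y = Cmul a (hinner x y);
  hinner_pos : forall x, 0 <= Re (hinner x x);
  hinner_def : forall x, Re (hinner x x) = 0 -> x = hzero;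
  hcomplete : forall u : nat -> carrier,
    (forall eps, eps > 0 -> exists N, forall m n, (m >= N)%nat -> (n >= N)%nat ->
       Re (hinner (hadd (u m) (hopp (u n))) (hadd (u m) (hopp (u n)))) < eps) ->
    exists l, forall eps, eps > 0 -> exists N, forall n, (n >= N)%nat ->
       Re (hinner (hadd (u n) (hopp l)) (hadd (u n) (hopp l))) < eps;
  hseparable : exists d : nat -> carrier, forall x eps, eps > 0 ->
    exists n, Re (hinner (hadd x (hopp (d n))) (hadd x (hopp (d n)))) < eps
}.
Arguments hzero {h}.
Arguments hadd {h}.
Arguments hopp {h}.
Arguments hscal {h}.
Arguments hinner {h}.

Definition norm2 {H : Hilbert} (x : H) : R := Re (hinner x x).

Record BOp (H H' : Hilbert) := {
  op :> H -> H';
  op_add : forall x y, op (hadd x y) = hadd (op x) (op y);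
  op_scal : forall a x, op (hscal a x) = hscal a (op x);
  op_bounded : exists M, forall x, norm2 (op x) <= M * norm2 x
}.
Arguments op {H H'}.

Definition is_adjoint {H H' : Hilbert} (T : BOp H H') (T' : BOp H' H) : Prop :=
  forall x y, hinner (T x) y = hinner x (T' y).

Definition positive_op {H : Hilbert} (T : BOp H H) : Prop :=
  forall x, Im (hinner (T x) x) = 0 /\ 0 <= Re (hinner (T x) x).

Definition GLplus {H : Hilbert} (T : BOp H H) : Prop :=
  positive_op T /\
  exists Ti : BOp H H, (forall x, T (Ti x) = x) /\ (forall x, Ti (T x) = x).

Definition sum_in (P : nat -> bool) (a : nat -> R) : nat -> R :=
  fun k => if P k then a k else 0.

Definition series_between (a : nat -> R) (lo hi : R) : Prop :=
  exists l, infinite_sum a l /\ lo <= l /\ l <= hi.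

Definition is_frame {V : Hilbert} (h : nat -> V) (I : nat -> bool) (a b : R) : Prop :=
  0 < a /\ 0 < b /\
  forall v : V, series_between (sum_in I (fun k => Cnorm2 (hinner v (h k))))
                               (a * norm2 v) (b * norm2 v).

Definition weave {H : Hilbert} {HL HO : nat -> Hilbert}
  (Lam : forall j, BOp H (HL j)) (Om : forall j, BOp H (HO j))
  (C C' : BOp H H) (sigma : nat -> bool) (f : H) : nat -> R :=
  fun j => if sigma j then Re (hinner (Lam j (C f)) (Lam j (C' f)))
           else Re (hinner (Om j (C f)) (Om j (C' f))).

Definition ctrl_Kg_frame_bounds {H : Hilbert} {Hj : nat -> Hilbert}
  (Kadj : BOp H H) (C C' : BOp H H) (Gam : forall j, BOp H (Hj j)) (A B : R) : Prop :=
  0 < A /\ A <= B /\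
  forall f : H, series_between (fun j => Re (hinner (Gam j (C f)) (Gam j (C' f))))
                               (A * norm2 (Kadj f)) (B * norm2 f).

Definition ctrl_Kg_frame {H : Hilbert} {Hj : nat -> Hilbert}
  (Kadj : BOp H H) (C C' : BOp H H) (Gam : forall j, BOp H (Hj j)) : Prop :=
  exists A B, ctrl_Kg_frame_bounds Kadj C C' Gam A B.

Definition ctrl_Kg_woven {H : Hilbert} {HL HO : nat -> Hilbert}
  (Kadj : BOp H H) (C C' : BOp H H)
  (Lam : forall j, BOp H (HL j)) (Om : forall j, BOp H (HO j)) : Prop :=
  exists A B, 0 < A /\ A <= B /\
    forall (sigma : nat -> bool) (f : H),
      series_between (weave Lam Om C C' sigma f) (A * norm2 (Kadj f)) (B * norm2 f).

Definition woven_K_frames {H : Hilbert} {HL HO : nat -> Hilbert}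
  (Kadj : BOp H H) (S : BOp H H)
  (Lamadj : forall j, BOp (HL j) H) (Omadj : forall j, BOp (HO j) H)
  (fr : forall j, nat -> HL j) (I : nat -> nat -> bool)
  (gr : forall j, nat -> HO j) (Q : nat -> nat -> bool) : Prop :=
  exists D1 D2, 0 < D1 /\ D1 <= D2 /\
    forall (sigma : nat -> bool) (f : H),
      exists inner_sums : nat -> R,
        (forall j, infinite_sum
           (if sigma j
            then sum_in (I j) (fun k => Cnorm2 (hinner f (S (Lamadj j (fr j k)))))
            else sum_in (Q j) (fun k => Cnorm2 (hinner f (S (Omadj j (gr j k))))))
           (inner_sums j)) /\
        series_between inner_sums (D1 * norm2 (Kadj f)) (D2 * norm2 f).

(* Main.v *)
Require Import Defs.
From Stdlib Require Import Reals.
Open Scope R_scope.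
From Stdlib Require Import Lra FunctionalExtensionality ClassicalEpsilon.

Lemma sum_scal (c : R) (b : nat -> R) n :
  sum_f_R0 (fun i => c * b i) n = c * sum_f_R0 b n.
Proof. induction n; simpl; [ring | rewrite IHn; ring]. Qed.

Lemma cv_scal (c L : R) (b : nat -> R) :
  infinite_sum b L -> infinite_sum (fun i => c * b i) (c * L).
Proof.
  intro h. unfold infinite_sum.
  assert (hc : Un_cv (fun _ : nat => c) c).
  { intros e he. exists 0%nat. intros. unfold Rdist. rewrite Rminus_diag, Rabs_R0. lra. }
  pose proof (CV_mult _ _ _ _ hc h) as h2.
  intros e he. destruct (h2 e he) as [N HN]. exists N. intros n hn.
  rewrite sum_scal. apply HN; auto.
Qed.

Lemma cmp_series (a b : nat -> R) (L d c : R) :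
  0 <= c ->
  (forall n, 0 <= b n) -> (forall n, 0 <= a n) ->
  (forall n, d * b n <= a n <= c * b n) -> infinite_sum b L ->
  exists l, infinite_sum a l /\ d * L <= l /\ l <= c * L.
Proof.
  intros hc hb ha hab hL.
  pose proof (cv_scal c L b hL) as hcL.
  pose proof (cv_scal d L b hL) as hdL.
  destruct (Rseries_CV_comp a (fun i => c * b i)) as [l hl].
  { intro n. split; [apply ha | apply hab]. }
  { exists (c * L). exact hcL. }
  exists l. split; [exact hl|]. split.
  - apply (@Rle_cv_lim (fun n => sum_f_R0 (fun i => d * b i) n) (fun n => sum_f_R0 a n)); auto.
    intro n. apply sum_Rle. intros; apply hab.
  - apply (@Rle_cv_lim (fun n => sum_f_R0 a n) (fun n => sum_f_R0 (fun i => c * b i) n)); auto.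
    intro n. apply sum_Rle. intros; apply hab.
Qed.

Lemma Cext (a b : Cplx) : Re a = Re b -> Im a = Im b -> a = b.
Proof. destruct a, b; simpl; intros; subst; reflexivity. Qed.

Lemma inner_add_r {H : Hilbert} (x y z : H) :
  hinner x (hadd y z) = Cadd (hinner x y) (hinner x z).
Proof.
  rewrite (hinner_conj _ x (hadd y z)), hinner_add_l,
    (hinner_conj _ x y), (hinner_conj _ x z).
  apply Cext; simpl; ring.
Qed.

Lemma inner_scal_r {H : Hilbert} (a : Cplx) (x y : H) :
  hinner x (hscal a y) = Cmul (Cconj a) (hinner x y).
Proof.
  rewrite (hinner_conj _ x (hscal a y)), hinner_scal_l, (hinner_conj _ x y).
  apply Cext; simpl; ring.
Qed.

Lemma pos_selfadj {H : Hilbert} (S : BOp H H) : positive_op S ->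
  forall x y, hinner (S x) y = hinner x (S y).
Proof.
  intros hp x y.
  set (i := mkC 0 1).
  assert (E1 := proj1 (hp (hadd x y))).
  assert (E2 := proj1 (hp (hadd x (hscal i y)))).
  assert (Ex := proj1 (hp x)). assert (Ey := proj1 (hp y)).
  assert (Eiy := proj1 (hp (hscal i y))).
  rewrite op_add, hinner_add_l, !inner_add_r in E1, E2.
  rewrite op_scal in E2, Eiy.
  rewrite !hinner_scal_l, !inner_scal_r in E2, Eiy.
  simpl in E1, E2, Ex, Ey, Eiy.
  rewrite (hinner_conj _ x (S y)).
  assert (Eiy0 : Im (hinner (hscal i (S y)) (hscal i y)) = 0).
  { rewrite <- op_scal. exact (proj1 (hp _)). }
  apply Cext; simpl; lra.
Qed.
Theorem mainTheorem4
  (H : Hilbert) (HL HO : nat -> Hilbert)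
  (K Kadj : BOp H H) (hK : is_adjoint K Kadj)
  (C C' : BOp H H) (hC : GLplus C) (hC' : GLplus C')
  (Lam : forall j, BOp H (HL j)) (Lamadj : forall j, BOp (HL j) H)
  (hLam : forall j, is_adjoint (Lam j) (Lamadj j))
  (Om : forall j, BOp H (HO j)) (Omadj : forall j, BOp (HO j) H)
  (hOm : forall j, is_adjoint (Om j) (Omadj j))
  (* standing assumption: commutation *)
  (hCC' : forall x, C (C' x) = C' (C x))
  (hCL : forall j x, C (Lamadj j (Lam j x)) = Lamadj j (Lam j (C x)))
  (hC'L : forall j x, C' (Lamadj j (Lam j x)) = Lamadj j (Lam j (C' x)))
  (hCO : forall j x, C (Omadj j (Om j x)) = Omadj j (Om j (C x)))
  (hC'O : forall j x, C' (Omadj j (Om j x)) = Omadj j (Om j (C' x)))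
  (* S = (CC')^{1/2}: the positive square root of CC' *)
  (S : BOp H H) (hSpos : positive_op S) (hSS : forall x, S (S x) = C (C' x))
  (hSL : forall j f, hinner (Lam j (C f)) (Lam j (C' f)) = hinner (Lam j (S f)) (Lam j (S f)))
  (hSO : forall j f, hinner (Om j (C f)) (Om j (C' f)) = hinner (Om j (S f)) (Om j (S f)))
  (* Lambda and Omega are (C,C')-controlled K-g-frames *)
  (hLamF : ctrl_Kg_frame Kadj C C' Lam) (hOmF : ctrl_Kg_frame Kadj C C' Om)
  (* local frames with uniform bounds *)
  (fr : forall j, nat -> HL j) (I : nat -> nat -> bool)
  (gr : forall j, nat -> HO j) (Q : nat -> nat -> bool)
  (alpha beta alpha' beta' : R)
  (hfr : forall j, is_frame (fr j) (I j) alpha beta)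
  (hgr : forall j, is_frame (gr j) (Q j) alpha' beta') :
  ctrl_Kg_woven Kadj C C' Lam Om <->
  woven_K_frames Kadj S Lamadj Omadj fr I gr Q.
Proof.
  set (m := Rmin alpha alpha'). set (M := Rmax beta beta').
  destruct (hfr 0%nat) as [ha [hb _]]. destruct (hgr 0%nat) as [ha' [hb' _]].
  assert (hm : 0 < m) by (unfold m, Rmin; destruct Rle_dec; lra).
  assert (hM : 0 < M) by (unfold M, Rmax; destruct Rle_dec; lra).
  assert (hn : forall g : H, 0 <= norm2 g) by (intro g; apply hinner_pos).
  assert (hw : forall (sigma : nat -> bool) (f : H) (j : nat), 0 <= weave Lam Om C C' sigma f j).
  { intros sigma f j. unfold weave. destruct (sigma j).
    - rewrite hSL. apply hinner_pos.
    - rewrite hSO. apply hinner_pos. }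
  assert (Kex : forall (sigma : nat -> bool) (f : H) (j : nat), exists t : R,
    infinite_sum
      (if sigma j
       then sum_in (I j) (fun k => Cnorm2 (hinner f (S (Lamadj j (fr j k)))))
       else sum_in (Q j) (fun k => Cnorm2 (hinner f (S (Omadj j (gr j k)))))) t
    /\ m * weave Lam Om C C' sigma f j <= t /\ t <= M * weave Lam Om C C' sigma f j).
  { intros sigma f j. pose proof (hw sigma f j) as hwj. unfold weave in *.
    destruct (sigma j).
    - replace (fun k => Cnorm2 (hinner f (S (Lamadj j (fr j k)))))
        with (fun k => Cnorm2 (hinner (Lam j (S f)) (fr j k))).
      2:{ apply functional_extensionality; intro k.
          rewrite <- (pos_selfadj S hSpos), <- hLam. reflexivity. }
      destruct (proj2 (proj2 (hfr j)) (Lam j (S f))) as [l [hl [h1 h2]]].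
      exists l. split; [exact hl|]. unfold norm2 in h1, h2. rewrite <- hSL in h1, h2.
      assert (m <= alpha) by apply Rmin_l. assert (beta <= M) by apply Rmax_l.
      split; nra.
    - replace (fun k => Cnorm2 (hinner f (S (Omadj j (gr j k)))))
        with (fun k => Cnorm2 (hinner (Om j (S f)) (gr j k))).
      2:{ apply functional_extensionality; intro k.
          rewrite <- (pos_selfadj S hSpos), <- hOm. reflexivity. }
      destruct (proj2 (proj2 (hgr j)) (Om j (S f))) as [l [hl [h1 h2]]].
      exists l. split; [exact hl|]. unfold norm2 in h1, h2. rewrite <- hSO in h1, h2.
      assert (m <= alpha') by apply Rmin_r. assert (beta' <= M) by apply Rmax_r.
      split; nra. }
  split.
  - intros [A [B [hA [hAB hW]]]].
    set (M2 := Rmax M (Rmax alpha alpha')).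
    assert (hmM2 : m <= M2).
    { unfold M2, m. eapply Rle_trans; [apply Rmin_l|].
      eapply Rle_trans; [apply Rmax_l|apply Rmax_r]. }
    assert (hMM2 : M <= M2) by apply Rmax_l.
    exists (m * A), (M2 * B). split; [nra|]. split; [nra|].
    intros sigma f.
    exists (fun j => proj1_sig (constructive_indefinite_description _ (Kex sigma f j))).
    split.
    + intro j. exact (proj1 (proj2_sig (constructive_indefinite_description _ (Kex sigma f j)))).
    + destruct (hW sigma f) as [L [hL [hl1 hl2]]].
      destruct (cmp_series
        (fun j => proj1_sig (constructive_indefinite_description _ (Kex sigma f j)))
        (weave Lam Om C C' sigma f) L m M) as [l [hl [c1 c2]]].
      * lra.
      * apply hw.
      * intro n. destruct (proj2_sig (constructive_indefinite_description _ (Kex sigma f n))) as [_ [u1 u2]].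
        pose proof (hw sigma f n). nra.
      * intro n. destruct (proj2_sig (constructive_indefinite_description _ (Kex sigma f n))) as [_ [u1 u2]].
        split; assumption.
      * exact hL.
      * exists l. split; [exact hl|].
        pose proof (hn f). pose proof (hn (Kadj f)). split.
        -- assert (m * (A * norm2 (Kadj f)) <= m * L) by (apply Rmult_le_compat_l; lra). nra.
        -- assert (M * L <= M * (B * norm2 f)) by (apply Rmult_le_compat_l; lra).
           assert (M * (B * norm2 f) <= M2 * (B * norm2 f)) by (apply Rmult_le_compat_r; nra). nra.
  - intros [D1 [D2 [h1 [h12 hW]]]].
    set (m' := Rmin m M).
    assert (hm' : 0 < m') by (unfold m', Rmin; destruct Rle_dec; lra).
    assert (hm'1 : m' <= m) by apply Rmin_l. assert (hm'2 : m' <= M) by apply Rmin_r.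
    exists (D1 * / M), (D2 * / m').
    assert (iM : 0 < / M) by (apply Rinv_0_lt_compat; lra).
    assert (im' : 0 < / m') by (apply Rinv_0_lt_compat; lra).
    assert (hiM : / M <= / m') by (apply Rinv_le_contravar; lra).
    assert (him : / m <= / m') by (apply Rinv_le_contravar; lra).
    assert (im : 0 < / m) by (apply Rinv_0_lt_compat; lra).
    split; [nra|]. split; [nra|].
    intros sigma f.
    destruct (hW sigma f) as [t [ht [T [hT [b1 b2]]]]].
    assert (hbd : forall j, m * weave Lam Om C C' sigma f j <= t j
                         /\ t j <= M * weave Lam Om C C' sigma f j).
    { intro j. destruct (Kex sigma f j) as [t' [ht' [u1 u2]]].
      rewrite (uniqueness_sum _ _ _ (ht j) ht'). split; assumption. }
    destruct (cmp_series (weave Lam Om C C' sigma f) t T (/ M) (/ m)) as [l [hl [c1 c2]]].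
    + lra.
    + intro n. destruct (hbd n). pose proof (hw sigma f n). nra.
    + apply hw.
    + intro n. destruct (hbd n) as [u1 u2]. pose proof (hw sigma f n). split.
      * apply (Rmult_le_reg_l M); [lra|]. rewrite <- Rmult_assoc, Rinv_r; lra.
      * apply (Rmult_le_reg_l m); [lra|]. rewrite <- Rmult_assoc, Rinv_r; lra.
    + exact hT.
    + exists l. split; [exact hl|].
      pose proof (hn f). pose proof (hn (Kadj f)). split.
      * assert (/ M * (D1 * norm2 (Kadj f)) <= / M * T) by (apply Rmult_le_compat_l; lra). nra.
      * assert (/ m * T <= / m * (D2 * norm2 f)) by (apply Rmult_le_compat_l; lra).
        assert (/ m * (D2 * norm2 f) <= / m' * (D2 * norm2 f)) by (apply Rmult_le_compat_r; nra). nra.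
Qed.
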